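(* For every $n>0$, there are finite alphabets $\Sigma_I,\Sigma_O$ and a language $L_n\subseteq(\Sigma_I\times\Sigma_O)^\omega$ recognized by a finitary Büchi automaton with costs $\mathcal{A}_n$ with $n+2$ states such that an optimal winning strategy for Player $O$ in $\Gamma_{f_0}(L_n)$ has cost $n$, but an optimal winning strategy for Player $O$ in $\Gamma_{f_1}(L_n)$ has cost $1$.
   Context: A parity automaton with costs is a tuple $\mathcal{A}=(Q,\Sigma,q_I,\delta,\Omega,\mathrm{Cst})$ with a finite set $Q$ of states, a finite alphabet $\Sigma$, an initial state $q_I$, a deterministic complete transition function $\delta\colon Q\times\Sigma\to Q$, a coloring $\Omega\colon Q\to\mathbb{N}$, and a cost function $\mathrm{Cst}$ assigning to every transition $(q,a,\delta(q,a))$ either $\epsilon$ or $\mathtt{i}$ (increment-transition). A finitary Büchi automaton is one in which every transition is an increment-transition and $\Omega(Q)=\{1,2\}$. The run on $a_0a_1\cdots$ is $(q_0,a_0,q_1)(q_1,a_1,q_2)\cdots$ with $q_0=q_I$, $q_{j+1}=\delta(q_j,a_j)$; the cost of a finite run is its number of increment-transitions. For odd $c$, $\mathrm{Ans}(c)=\{c'\in\Omega(Q)\mid c'>c,\ c'\text{ even}\}$. For an infinite run $\rho$ and $n$, $\mathrm{Cor}(\rho,n)=0$ if $\Omega(q_n)$ is even, and otherwise it is the minimal cost of $(q_n,a_n,q_{n+1})\cdots(q_{n'-1},a_{n'-1},q_{n'})$ over $n'>n$ with $\Omega(q_{n'})\in\mathrm{Ans}(\Omega(q_n))$ ($\min\emptyset=\infty$).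 The run is accepting if $\limsup_n\mathrm{Cor}(\rho,n)<\infty$; $L(\mathcal{A})$ is the set of infinite words whose run is accepting. A delay function is a map $f\colon\mathbb{N}\to\mathbb{N}\setminus\{0\}$; for $k\ge0$, $f_k$ denotes the delay function with $f_k(0)=k+1$ and $f_k(i)=1$ for $i>0$. For $L\subseteq(\Sigma_I\times\Sigma_O)^\omega$, the delay game $\Gamma_f(L)$ is played in rounds $i=0,1,2,\ldots$: in round $i$, Player $I$ picks $u_i\in\Sigma_I^{f(i)}$, then Player $O$ picks $v_i\in\Sigma_O$. Player $O$ wins the play if the outcome, i.e., the word over $\Sigma_I\times\Sigma_O$ pairing $u_0u_1u_2\cdots$ and $v_0v_1v_2\cdots$ letterwise, is in $L$. A strategy for Player $O$ is a map $\tau_O\colon\Sigma_I^*\to\Sigma_O$; a play is consistent with $\tau_O$ if $v_i=\tau_O(u_0\cdots u_i)$ for all $i$; $\tau_O$ is winning if every consistent play is won by Player $O$. For a winning strategy $\tau_O$ in $\Gamma_f(L(\mathcal{A}))$, its cost is $\mathrm{Cst}_\mathcal{A}(\tau_O)=\sup_w\limsup_{n\to\infty}\mathrm{Cor}(\rho(w),n)$, where $w$ ranges over outcomes of plays consistent with $\tau_O$ and $\rho(w)$ is the run of $\mathcal{A}$ on $w$; a winning strategy is optimal if its cost is minimal among all winning strategies of Player $O$ in $\Gamma_f(L(\mathcal{A}))$. *)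

(* Defs.v *)
From HB Require Import structures.
From mathcomp Require Import all_boot all_order all_algebra.
From mathcomp Require Import all_classical all_reals ereal sequences.
Set Implicit Arguments. Unset Strict Implicit. Unset Printing Implicit Defensive.
Import Order.TTheory GRing.Theory Num.Theory.
Local Open Scope classical_set_scope.
Local Open Scope ring_scope.

(* Parity automaton with costs over alphabet Sigma.
   Cst q a = true  means the transition (q,a,delta q a) is an increment 'i';
   Cst q a = false means it is epsilon. *)
Record pac (Sigma : finType) := Pac {
  state : finType;
  qI : state;
  delta : state -> Sigma -> state;
  Omega : state -> nat;
  Cst : state -> Sigma -> bool }.

Arguments Pac {Sigma}.
Arguments state {Sigma} p.
Arguments qI {Sigma} p.
Arguments delta {Sigma} p _ _.
Arguments Omega {Sigma} p _.
Arguments Cst {Sigma} p _ _.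

Definition finitary_buchi (Sigma : finType) (A : pac Sigma) : Prop :=
  (forall q a, Cst A q a = true) /\ range (Omega A) = [set 1%N; 2%N].

Section Runs.
Context {Sigma : finType} (A : pac Sigma).

Fixpoint runst (w : nat -> Sigma) (j : nat) : state A :=
  match j with
  | 0 => qI A
  | j'.+1 => delta A (runst w j') (w j')
  end.

Definition segcost (w : nat -> Sigma) (n n' : nat) : nat :=
  (\sum_(n <= j < n') (Cst A (runst w j) (w j) : nat))%N.

Definition Ans (c : nat) : set nat :=
  [set c' | range (Omega A) c' /\ (c < c')%N /\ ~~ odd c'].

Context {R : realType}.

(* Cor(rho, n), with min over the empty set = +oo *)
Definition Cor (w : nat -> Sigma) (n : nat) : \bar R :=
  if ~~ odd (Omega A (runst w n)) then 0%E
  else ereal_inf [set ((segcost w n n')%:R)%:E | n' in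
                    [set n' | (n < n')%N /\ Ans (Omega A (runst w n)) (Omega A (runst w n'))]].

Definition accepting (w : nat -> Sigma) : Prop :=
  (limn_esup (Cor w) < +oo)%E.

End Runs.

Definition lang {R : realType} {Sigma : finType} (A : pac Sigma) : set (nat -> Sigma) :=
  [set w | @accepting Sigma A R w].

Definition delay_function (f : nat -> nat) : Prop := forall i, (0 < f i)%N.

Definition fk (k : nat) : nat -> nat := fun i => if i == 0%N then k.+1 else 1%N.

Section Game.
Context {SI SO : finType}.

Definition strategyO := seq SI -> SO.

(* Player I's choices u_0 u_1 ... concatenate to an input word alpha; u_0...u_i
   is the prefix of alpha of length f(0)+...+f(i).  Every alpha arises from a
   unique sequence of choices of Player I, so plays consistent with tau are in
   bijection with input words alpha. *)
Definition prefix_len (f : nat -> nat) (i : nat) : nat := (\sum_(j < i.+1) f j)%N.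

Definition outcome (f : nat -> nat) (tau : strategyO) (alpha : nat -> SI) : nat -> (SI * SO)%type :=
  fun j => (alpha j, tau [seq alpha m | m <- iota 0 (prefix_len f j)]).

Definition winning (f : nat -> nat) (L : set (nat -> (SI * SO)%type)) (tau : strategyO) : Prop :=
  forall alpha, L (outcome f tau alpha).

Context {R : realType}.

Definition strat_cost (A : pac (SI * SO)%type) (f : nat -> nat) (tau : strategyO) : \bar R :=
  ereal_sup [set limn_esup (@Cor _ A R (outcome f tau alpha)) | alpha in [set: nat -> SI]].

Definition optimal_winning (A : pac (SI * SO)%type) (f : nat -> nat) (tau : strategyO) : Prop :=
  winning f (@lang R _ A) tau /\
  forall tau', winning f (@lang R _ A) tau' -> (strat_cost A f tau <= strat_cost A f tau')%E.

End Game.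

(* Main.v *)
Require Import Defs.
From HB Require Import structures.
From mathcomp Require Import all_boot all_order all_algebra.
From mathcomp Require Import all_classical all_reals ereal sequences.
From mathcomp Require Import zify.
Import Order.TTheory GRing.Theory Num.Theory.
Local Open Scope classical_set_scope.
Local Open Scope ring_scope.

Section Limsup.
Context {R : realType}.
Local Open Scope ereal_scope.

Lemma esup_inf (u : (\bar R)^nat) : limn_esup u = ereal_inf (range (esups u)).
Proof. rewrite limn_esup_lim; apply: cvg_lim => //; exact: cvg_esups_inf. Qed.

Lemma limsup_ub (u : (\bar R)^nat) c : (forall m, u m <= c) -> limn_esup u <= c.
Proof.
move=> H; rewrite esup_inf (@le_trans _ _ (esups u 0%N)) //.
  by apply: ereal_inf_lbound; exists 0%N.
by apply: ge_ereal_sup => _ [m _ <-].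
Qed.

Lemma limsup_lb (u : (\bar R)^nat) c :
  (forall N, exists m, (N <= m)%N /\ c <= u m) -> c <= limn_esup u.
Proof.
move=> H; rewrite esup_inf; apply: le_ereal_inf_tmp => _ [N _ <-].
have [m [Nm cm]] := H N; apply: (le_trans cm).
by apply: ereal_sup_ubound; exists m.
Qed.
End Limsup.

Section Aut.
Variable n : nat.
Hypothesis hn : (0 < n)%N.

Definition dlt (i : 'I_n.+2) (ab : bool * bool) : 'I_n.+2 :=
  if (i < 2)%N then (if ab.1 == (val i == 1%N) then inord 2 else inord n.+1)
  else if val i == 2%N then inord (nat_of_bool ab.2) else inord (val i).-1.

Definition Om (i : 'I_n.+2) : nat := if (i < 2)%N then 2%N else 1%N.

Definition Aut : pac (bool * bool)%type :=
  Pac ('I_n.+2) (inord 2) dlt Om (fun _ _ => true).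

Definition v (w : nat -> bool * bool) m : nat := val (runst Aut w m).

Lemma v0 w : v w 0 = 2%N.
Proof. by rewrite /v /= inordK //; lia. Qed.

Lemma vS w m : v w m.+1 =
  if (v w m < 2)%N then (if (w m).1 == (v w m == 1%N) then 2%N else n.+1)
  else if v w m == 2%N then nat_of_bool (w m).2 else (v w m).-1.
Proof.
rewrite /v /= /dlt; set i := runst Aut w m.
case: ifP => _; first case: ifP => _; rewrite ?inordK //; try lia.
case: ifP => _; rewrite inordK //; first by case: (w m).2; lia.
exact: leq_ltn_trans (leq_pred _) (ltn_ord i).
Qed.

Lemma v_lt w m : (v w m < n.+2)%N.
Proof. exact: ltn_ord. Qed.

Lemma segcostE w m m' : (m <= m')%N -> segcost Aut w m m' = (m' - m)%N.
Proof. by move=> _; rewrite /segcost sum_nat_const_nat muln1. Qed.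

Lemma descend w m : (2 <= v w m)%N ->
  (forall t, (t <= (v w m).-2)%N -> v w (m + t) = (v w m - t)%N) /\
  (v w (m + (v w m).-1) < 2)%N.
Proof.
move=> h.
have A : forall t, (t <= (v w m).-2)%N -> v w (m + t) = (v w m - t)%N.
  elim=> [|t IH] ht; first by rewrite addn0 subn0.
  rewrite addnS vS IH; last exact: ltnW.
  have -> : (v w m - t < 2)%N = false by apply/negbTE; rewrite -leqNgt; lia.
  have -> : (v w m - t == 2)%N = false by apply/negbTE; lia.
  lia.
split => //.
have -> : (v w m).-1 = ((v w m).-2).+1 by case: (v w m) h => [|[]].
rewrite addnS vS A //.
have -> : (v w m - (v w m).-2 < 2)%N = false by apply/negbTE; rewrite -leqNgt; lia.
have -> : (v w m - (v w m).-2 == 2)%N by apply/eqP; lia.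
by case: (w _).2.
Qed.

Section C.
Context {R : realType}.
Local Open Scope ereal_scope.

Lemma Cor_even w m : (v w m < 2)%N -> @Cor _ Aut R w m = 0.
Proof. by rewrite /Cor /= /Om /v => ->. Qed.

Lemma Cor_odd w m : (2 <= v w m)%N -> @Cor _ Aut R w m = (((v w m).-1)%:R)%:E.
Proof.
move=> h; rewrite /Cor /= /Om.
have -> : (runst Aut w m < 2)%N = false by apply/negbTE; rewrite -leqNgt.
rewrite /=.
have [A B] := descend w m h.
apply/eqP; rewrite eq_le; apply/andP; split.
  apply: ereal_inf_lbound; exists (m + (v w m).-1)%N.
    split; first by case: (v w m) h => [|[]] //= k _; lia.
    rewrite /Ans; split; first by exists (runst Aut w (m + (v w m).-1)).
    by move: B; rewrite /v => ->.
  by rewrite segcostE ?leq_addr // addKn.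
apply: le_ereal_inf_tmp => _ [n' [mn' hA] <-].
rewrite segcostE; last exact: ltnW.
rewrite lee_fin ler_nat.
move: hA; rewrite /Ans; case: ifP => //; last by move=> _ [_ [] ].
move=> hlt _.
rewrite leqNgt; apply/negP => hc.
have ht : (n' - m <= (v w m).-2)%N by lia.
have := A _ ht; rewrite subnKC; last exact: ltnW.
move=> E; change (is_true (v w n' < 2)%N) in hlt; move: hlt; rewrite E; lia.
Qed.

End C.
End Aut.

Lemma prefix_fk k j : prefix_len (fk k) j = (k.+1 + j)%N.
Proof.
rewrite /prefix_len; elim: j => [|j IH]; first by rewrite big_ord1 addn0.
by rewrite big_ord_recr /= IH /fk /= addn1 addnS.
Qed.

Section G.
Variable n : nat.
Hypothesis hn : (0 < n)%N.
Context {R : realType}.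
Local Open Scope ereal_scope.

Lemma Cor_le w m : @Cor _ (Aut n) R w m <= (n%:R)%:E.
Proof.
have [h|h] := ltnP (v n w m) 2.
  by rewrite Cor_even // lee_fin; lia.
rewrite (Cor_odd n hn) // lee_fin ler_nat.
have := v_lt n w m; lia.
Qed.

Lemma Cor_ge1 w m : (2 <= v n w m)%N -> 1 <= @Cor _ (Aut n) R w m.
Proof.
move=> h; rewrite (Cor_odd n hn) // lee_fin ler1n; lia.
Qed.

Lemma odd_io w N : exists m, (N <= m)%N /\ (2 <= v n w m)%N.
Proof.
have [h|h] := ltnP (v n w N) 2; last by exists N.
exists N.+1; split => //; rewrite (vS n hn) h; case: ifP => _; lia.
Qed.

Lemma cost_le (f : nat -> nat) (tau : @strategyO bool bool) :
  @strat_cost bool bool R (Aut n) f tau <= (n%:R)%:E.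
Proof.
apply: ge_ereal_sup => _ [alpha _ <-]; apply: limsup_ub => m. exact: Cor_le.
Qed.

Lemma win (f : nat -> nat) (tau : @strategyO bool bool) :
  winning f (@lang R _ (Aut n)) tau.
Proof.
move=> alpha; rewrite /lang /accepting /=.
have := @limsup_ub R _ _ (fun m => Cor_le (outcome f tau alpha) m).
move/le_lt_trans; apply; exact: ltry.
Qed.

Lemma cost_ge1 (f : nat -> nat) (tau : @strategyO bool bool) :
  1 <= @strat_cost bool bool R (Aut n) f tau.
Proof.
apply: (@le_trans _ _ (limn_esup (@Cor _ (Aut n) R (outcome f tau (fun _ => false))))).
  apply: limsup_lb => N; have [m [Nm hm]] := odd_io (outcome f tau (fun _ => false)) N.
  by exists m; split => //; apply: Cor_ge1.
by apply: ereal_sup_ubound; exists (fun _ => false).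
Qed.

End G.

Definition tau1 : @strategyO bool bool := fun s => last false s.

Fixpoint pre (tau : seq bool -> bool) j : seq bool :=
  if j is j'.+1 then rcons (pre tau j') (~~ tau (pre tau j')) else [::].
Definition adv tau j := ~~ tau (pre tau j).

Lemma pre_map tau j : map (adv tau) (iota 0 j) = pre tau j.
Proof.
elim: j => [//|j IH].
by rewrite -addn1 iotaD map_cat IH /= addn1 cats1.
Qed.

Lemma last_iota (alpha : nat -> bool) m :
  last false (map alpha (iota 0 m.+2)) = alpha m.+1.
Proof. by rewrite -addn1 iotaD map_cat last_cat /= add0n. Qed.

Definition wadv (tau : @strategyO bool bool) := outcome (fk 0) tau (adv tau).
Definition w1 alpha := outcome (fk 1) tau1 alpha.

Section G2.
Variable n : nat.
Hypothesis hn : (0 < n)%N.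
Context {R : realType}.
Local Open Scope ereal_scope.

Lemma adv_hit (tau : @strategyO bool bool) m :
  (v n (wadv tau) m.+1 < 2)%N -> v n (wadv tau) m.+2 = n.+1.
Proof.
set w := wadv tau => h.
have E : (v n w m.+1 == 1%N) = (w m).2.
  move: h; rewrite (vS n hn w m).
  case: ifP => h1; first by case: ifP => _; lia.
  case: ifP => h2; first by case: (w m).2.
  have := h1; have := h2; lia.
rewrite (vS n hn w m.+1) h E.
have -> : (w m.+1).1 = ~~ (w m).2.
  by rewrite /w /wadv /outcome /= prefix_fk /adv -pre_map.
by case: (w m).2.
Qed.

Lemma adv_io (tau : @strategyO bool bool) N :
  exists m, (N <= m)%N /\ v n (wadv tau) m = n.+1.
Proof.
set w := wadv tau.
have [h|h] := ltnP (v n w N.+1) 2.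
  by exists N.+2; split; first lia; apply: (adv_hit tau N).
have [_ B] := descend n hn w N.+1 h.
exists (N.+1 + (v n w N.+1).-1).+1; split; first lia.
rewrite addSn; apply: (adv_hit tau (N + (v n w N.+1).-1)); rewrite -addSn //.
Qed.

Lemma cost_ge_n (tau : @strategyO bool bool) :
  (n%:R)%:E <= @strat_cost bool bool R (Aut n) (fk 0) tau.
Proof.
set w := wadv tau.
apply: (@le_trans _ _ (limn_esup (@Cor _ (Aut n) R w))).
  apply: limsup_lb => N; have [m [Nm hm]] := adv_io tau N.
  exists m; split => //; rewrite (Cor_odd n hn) hm //; lia.
by apply: ereal_sup_ubound; exists (adv tau).
Qed.


Lemma tau1_inv alpha m :
  v n (w1 alpha) m = 2%N \/ ((v n (w1 alpha) m < 2)%N /\ (v n (w1 alpha) m == 1%N) = alpha m).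
Proof.
set w := w1 alpha; elim: m => [|m IH]; first by left; apply: v0.
have E : (w m).2 = alpha m.+1 by rewrite /w /w1 /outcome /tau1 /= prefix_fk last_iota.
rewrite (vS n hn w m).
case: IH => [h|[h1 h2]].
  by rewrite h ltnn eqxx E; right; case: (alpha m.+1).
have -> : (w m).1 = alpha m by [].
by rewrite h1 -h2 eqxx; left.
Qed.

Lemma cost_tau1 : @strat_cost bool bool R (Aut n) (fk 1) tau1 <= 1.
Proof.
apply: ge_ereal_sup => _ [alpha _ <-]; apply: limsup_ub => m.
case: (tau1_inv alpha m) => [h|[h _]].
  by rewrite (Cor_odd n hn) h.
by rewrite Cor_even.
Qed.

End G2.

Theorem theorem5 (R : realType) (n : nat) (hn : (0 < n)%N) :
  exists (SI SO : finType) (A : pac (SI * SO)%type),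
    finitary_buchi A /\ #|{: state A}| = n.+2 /\
    (exists tau : @strategyO SI SO,
        @optimal_winning SI SO R A (fk 0) tau /\ @strat_cost SI SO R A (fk 0) tau = (n%:R)%:E) /\
    (exists tau : @strategyO SI SO,
        @optimal_winning SI SO R A (fk 1) tau /\ @strat_cost SI SO R A (fk 1) tau = (1%:R)%:E).
Proof.
exists bool, bool, (Aut n).
split.
  split => //.
  apply/seteqP; split => x.
    by case=> i _ <-; rewrite /= /Om; case: ifP => _; [right|left].
  case=> ->.
    exists (inord 2) => //; rewrite /= /Om inordK; [by [] | lia].
  by exists ord0.
split; first by rewrite card_ord.
have c0 : @strat_cost bool bool R (Aut n) (fk 0) (fun _ => false) = (n%:R)%:E.
  by apply/eqP; rewrite eq_le (cost_le n hn) (cost_ge_n n hn).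
have c1 : @strat_cost bool bool R (Aut n) (fk 1) tau1 = 1%E.
  apply/eqP; rewrite eq_le; apply/andP; split.
    exact: (cost_tau1 n hn).
  exact: (cost_ge1 n hn).
split.
  exists (fun _ => false); split; last exact: c0.
  split; first exact: win.
  by move=> tau' _; rewrite c0; exact: (cost_ge_n n hn).
exists tau1; split; last by rewrite c1.
split; first exact: win.
by move=> tau' _; rewrite c1; exact: (cost_ge1 n hn).
Qed.
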